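(* Consider the mechanism \textbf{InpPS} below with privacy parameter $\epsilon>0$ applied to $N$ users with $d$ binary attributes (with $N$ at least proportional, up to logarithmic factors, to $2^d$). Then \textbf{InpPS} satisfies $\epsilon$-local differential privacy, and with constant probability, for a target $k$-way marginal $\beta$, \[ \|\mathcal{C}^\beta(t)-\mathcal{C}^\beta(t^* )\|_1=\tilde{O}\Big(\frac{2^{d+k/2}}{\epsilon\sqrt{N}}\Big). \]
   Context: Setting: there are $N$ users; user $i$ holds $j_i\in\{0,1\}^d$, represented as the indicator vector $t_i\in\{0,1\}^{2^d}$ (indexed by $\{0,1\}^d$) with $t_i[j_i]=1$ and all other entries $0$. The population distribution is $t=\frac1N\sum_{i=1}^N t_i$. For $\beta\in\{0,1\}^d$ with $k$ ones (a $k$-way marginal) and $\gamma\in\{0,1\}^d$ with $\gamma\wedge\beta=\gamma$ (bitwise AND), the marginal operator is $\mathcal{C}^\beta(v)[\gamma]=\sum_{\eta:\ \eta\wedge\beta=\gamma} v[\eta]$ for $v\in\mathbb{R}^{2^d}$; $\|\cdot\|_1$ sums absolute values over the $2^k$ such $\gamma$. Local differential privacy: a randomized mechanism $F$ on a single user's input is $\epsilon$-LDP if for all inputs $t_i,t_i'$ and every output $R$, $\Pr[F(t_i)=R]\le e^{\epsilon}\Pr[F(t_i')=R]$. \textbf{InpPS} (preferential sampling on the input): let $m=2^d$, $D=m-1$, $p_s=(1+(m-1)e^{-\epsilon})^{-1}$. User $i$ reports an index $\ell_i\in\{0,1\}^d$, equal to $j_i$ with probability $p_s$, and otherwise uniformly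 random among the $m-1$ indices different from $j_i$. The aggregator lets $F_j$ be the fraction of users reporting $j$, sets $t^*[j]=\frac{DF_j+p_s-1}{Dp_s+p_s-1}$, and answers marginal $\beta$ by $\mathcal{C}^\beta(t^* )$. ''With constant probability'' means with probability at least any fixed constant less than $1$; $\tilde O$ suppresses constant factors and factors logarithmic in $N,d,k,1/\epsilon$ and the failure probability. *)

(* Defs.v *)
From HB Require Import structures.
From mathcomp Require Import all_boot all_order all_algebra.
From mathcomp Require Import all_classical all_reals all_analysis.
Set Implicit Arguments. Unset Strict Implicit. Unset Printing Implicit Defensive.
Import Order.TTheory GRing.Theory Num.Theory.
Local Open Scope ring_scope.

Definition bits (d : nat) := {ffun 'I_d -> bool}.

Definition band (d : nat) (a b : bits d) : bits d := [ffun i => a i && b i].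

Definition nones (d : nat) (b : bits d) : nat := #|[set i | b i]|.

Definition marginal (R : realType) (d : nat) (beta : bits d) (v : bits d -> R)
  (g : bits d) : R := \sum_(eta : bits d | band eta beta == g) v eta.

Definition marg_dist (R : realType) (d : nat) (beta : bits d) (u v : bits d -> R) : R :=
  \sum_(g : bits d | band g beta == g) `|marginal beta u g - marginal beta v g|.

Definition pop_dist (R : realType) (N d : nat) (j : 'I_N -> bits d) : bits d -> R :=
  fun eta => #|[set i | j i == eta]|%:R / N%:R.

Definition ps (R : realType) (d : nat) (eps : R) : R :=
  (1 + ((2:R) ^+ d - 1) * expR (- eps))^-1.

(* InpPS per-user randomizer: probability of reporting l on input x *)
Definition inpps_prob (R : realType) (d : nat) (eps : R) (x l : bits d) : R :=
  if l == x then ps d eps else (1 - ps d eps) / ((2:R) ^+ d - 1).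

Definition local_dp (R : realType) (In Out : finType) (eps : R) (M : In -> Out -> R) : Prop :=
  forall (x x' : In) (r : Out), M x r <= expR eps * M x' r.

Definition freq (R : realType) (N d : nat) (l : {ffun 'I_N -> bits d}) (j : bits d) : R :=
  #|[set i | l i == j]|%:R / N%:R.

Definition tstar (R : realType) (N d : nat) (eps : R) (l : {ffun 'I_N -> bits d}) : bits d -> R :=
  fun j => let D := (2:R) ^+ d - 1 in
    (D * freq R l j + ps d eps - 1) / (D * ps d eps + ps d eps - 1).

(* probability (over the independent randomness of the N users) of an event on the
   vector of reports *)
Definition inpps_event_prob (R : realType) (N d : nat) (eps : R) (j : 'I_N -> bits d)
  (E : pred {ffun 'I_N -> bits d}) : R :=
  \sum_(l : {ffun 'I_N -> bits d} | E l) \prod_(i < N) inpps_prob eps (j i) (l i).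

Definition logfac (R : realType) (N d k : nat) (eps delta : R) : R :=
  1 + ln (N%:R : R) + ln (d.+1%:R : R) + ln (k.+1%:R : R) + ln (1 + eps^-1) + ln (delta^-1).

(* Main.v *)
Require Import Defs.
From HB Require Import structures.
From mathcomp Require Import all_boot all_order all_algebra.
From mathcomp Require Import all_classical all_reals all_analysis.
From mathcomp Require Import ring lra.
Import Order.TTheory GRing.Theory Num.Theory.
Local Open Scope ring_scope.
Set Implicit Arguments. Unset Strict Implicit. Unset Printing Implicit Defensive.

Lemma expR_le_quad (R : realType) (y : R) : y <= 1/2 -> expR y <= 1 + y + 2 * y^+2.
Proof.
move=> hy.
have h1 : 1 - y <= expR (- y) by have := expR_ge1Dx (- y); rewrite -/(1 - y).
have hpos : 0 < 1 - y by lra.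
have hE : expR y * expR (- y) = 1 by rewrite -expRD subrr expR0.
have hey : 0 < expR y := expR_gt0 y.
have h2 : expR y * (1 - y) <= 1 by rewrite -{2}hE ler_pM2l.
have h3 : 1 <= (1 + y + 2 * y^+2) * (1 - y).
  have : 0 <= y^+2 * (1 - 2 * y) by apply: mulr_ge0; [exact: sqr_ge0| lra].
  nra.
nra.
Qed.

Section Basics.
Variable R : realType.
Variables (d : nat) (eps : R).
Hypothesis hd : (1 <= d)%N.
Hypothesis heps : 0 < eps.

Definition mm : R := (2:R) ^+ d.
Definition DD : R := mm - 1.
Definition uu : R := expR (- eps).
Definition pp : R := ps d eps.
Definition qq : R := 1 - pp.

Lemma mm_ge2 : 2 <= mm.
Proof.
rewrite /mm; case: d hd => // n _; rewrite exprS.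
have : 1 <= (2:R) ^+ n by rewrite exprn_ege1 // ler1n.
nra.
Qed.

Lemma DD_ge1 : 1 <= DD. Proof. have := mm_ge2; rewrite /DD; lra. Qed.

Lemma uu_gt0 : 0 < uu. Proof. exact: expR_gt0. Qed.
Lemma uu_lt1 : uu < 1. Proof. by rewrite /uu expR_lt1 oppr_lt0. Qed.

Lemma pp_def : pp = (1 + DD * uu)^-1. Proof. by []. Qed.

Lemma pp_gt0 : 0 < pp.
Proof. rewrite pp_def invr_gt0; have := DD_ge1; have := uu_gt0; nra. Qed.

Lemma pp_eq : pp * (1 + DD * uu) = 1.
Proof. rewrite pp_def mulVf //; apply: lt0r_neq0; have := DD_ge1; have := uu_gt0; nra. Qed.

Lemma qq_eq : qq = DD * uu * pp.
Proof. rewrite /qq; have := pp_eq; nra. Qed.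

Lemma prob_eq (x l : bits d) : inpps_prob eps x l = if l == x then pp else uu * pp.
Proof.
rewrite /inpps_prob; case: eqP => // _.
rewrite -/pp -/mm -/DD -/qq qq_eq; have := DD_ge1 => h.
by field; apply: contraTneq h => ->; lra.
Qed.

Lemma prob_ge0 (x l : bits d) : 0 <= inpps_prob eps x l.
Proof. rewrite prob_eq; have := pp_gt0; have := uu_gt0; case: eqP => _; nra. Qed.

Lemma card_bits : #|{: bits d}| = (2 ^ d)%N.
Proof. by rewrite card_ffun card_bool card_ord. Qed.

Lemma prob_sum (x : bits d) : \sum_l inpps_prob eps x l = 1.
Proof.
rewrite (bigD1 x) //= prob_eq eqxx.
under eq_bigr => l hl do rewrite prob_eq (negbTE hl).
rewrite sumr_const cardC1 card_bits.
have -> : ((uu * pp) *+ (2 ^ d).-1) = DD * uu * pp.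
  have hn : ((2 ^ d)%N.-1)%:R = DD :> R.
    by rewrite /DD /mm -subn1 natrB ?expn_gt0 // natrX.
  rewrite -mulr_natl hn; ring.
have := pp_eq; nra.
Qed.

End Basics.

Lemma ldp_part (R : realType) (d : nat) (eps : R) :
  0 < eps -> local_dp eps (@inpps_prob R d eps).
Proof.
move=> he x x' r.
have hE1 : 1 <= expR eps by rewrite -expR0 ler_expR ltW.
have hEu : expR eps * uu eps = 1 by rewrite /uu -expRD subrr expR0.
case: d x x' r => [|d] x x' r.
  have hxx : forall a b : bits 0, a = b by move=> a b; apply/ffunP => -[].
  rewrite (hxx x' r) (hxx x r) /inpps_prob eqxx /ps expr0 subrr mul0r addr0 invr1.
  lra.
have hd : (1 <= d.+1)%N by [].
rewrite !prob_eq //.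
have hp := @pp_gt0 R d.+1 eps hd; have hu := @uu_gt0 R eps; have hu1 := uu_lt1 he.
case: eqP => _; case: eqP => _; nra.
Qed.

Lemma card_sum (R : realType) (I T : finType) (f : I -> T) (t : T) :
  (#|[set i | f i == t]|%:R : R) = \sum_i (f i == t)%:R.
Proof.
rewrite -natr_sum cardsE -sum1_card big_mkcond /=.
congr (_%:R); apply: eq_bigr => i _; rewrite inE; by case: (f i == t).
Qed.

Lemma le_of_eq (R : realType) (x y : R) : x = y -> x <= y.
Proof. by move=> ->. Qed.

Lemma small_mul (R : realType) (a b : R) : -(1/2) <= a -> a <= 1/2 -> -1 <= b -> b <= 1 -> a * b <= 1/2.
Proof.
move=> h1 h2 h3 h4.
have e1 : 0 <= (1/2 - a) * (1 + b) by apply: mulr_ge0; lra.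
have e2 : 0 <= (1/2 + a) * (1 - b) by apply: mulr_ge0; lra.
lra.
Qed.

Lemma bernoulli_ineq (R : realType) (q : R) (n : nat) : 0 <= q <= 1 -> 1 - n%:R * q <= (1 - q) ^+ n.
Proof.
move=> /andP [h0 h1]; elim: n => [|n IH]; first by rewrite mul0r subr0 expr0.
rewrite exprSr -addn1 natrD.
have hq : 0 <= 1 - q by lra.
have := ler_wpM2r hq IH.
have : 0 <= n%:R * (q * q) :> R by apply: mulr_ge0; [exact: ler0n| exact: mulr_ge0].
lra.
Qed.

Lemma natr_true (R : realType) : (true%:R : R) = 1. Proof. by []. Qed.
Lemma natr_false (R : realType) : (false%:R : R) = 0. Proof. by []. Qed.

Section Main.
Variable R : realType.
Variables (d N : nat) (eps : R) (j : 'I_N -> bits d) (beta : bits d).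
Hypothesis hd : (1 <= d)%N.
Hypothesis hN : (0 < N)%N.
Hypothesis heps : 0 < eps.

Local Notation pr := (@inpps_prob R d eps).
Local Notation D := (DD R d).
Local Notation p := (pp d eps).
Local Notation q := (qq d eps).
Local Notation u := (uu eps).

Let hpeq : p * (1 + D * u) = 1 := pp_eq eps hd.
Let hD1 : 1 <= D := DD_ge1 R hd.
Let hp0 : 0 < p := pp_gt0 eps hd.
Let hu0 : 0 < u := uu_gt0 eps.
Let hu1 : u < 1 := uu_lt1 heps.
Let hqeq : q = D * u * p := qq_eq eps hd.
Let hprob := prob_eq eps hd.
Ltac getf := have ? := hpeq; have ? := hD1; have ? := hp0; have ? := hu0; have ? := hu1.

Definition blk (e : bits d) : bits d := band e beta.
Definition PP (g x : bits d) : R := \sum_(e | blk e == g) pr x e.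
Definition ZZ (g x o : bits d) : R := (blk o == g)%:R - PP g x.
Definition YY (g : bits d) (l : {ffun 'I_N -> bits d}) : R := \sum_i ZZ g (j i) (l i).
Definition den : R := D * p + p - 1.
Definition KK : R := D / den.

Lemma den_eq : den = D * p * (1 - u).
Proof.
have h : p - 1 = - (D * u * p) by rewrite -hpeq; ring.
by rewrite /den -addrA h; ring.
Qed.

Lemma den_gt0 : 0 < den.
Proof.
rewrite den_eq; getf; apply: mulr_gt0; [apply: mulr_gt0|]; lra.
Qed.

Lemma KK_eq : KK = (p * (1 - u))^-1.
Proof.
rewrite /KK den_eq; getf; field; apply/and3P; split; apply: lt0r_neq0; lra.
Qed.

Lemma KK_ge0 : 0 <= KK.
Proof. rewrite /KK; apply: divr_ge0; [getf; lra| exact: ltW den_gt0]. Qed.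

Lemma pr_ident (x e : bits d) : D * pr x e - q = (e == x)%:R * den.
Proof.
rewrite hprob hqeq /den; case: eqP => _ /=.
  rewrite mul1r; getf; nra.
rewrite mul0r; ring.
Qed.

Lemma point_diff (l : {ffun 'I_N -> bits d}) (e : bits d) :
  @pop_dist R N d j e - tstar eps l e = - (KK / N%:R) * \sum_i ((l i == e)%:R - pr (j i) e).
Proof.
rewrite /pop_dist /tstar /freq !card_sum -/(DD R d) -/(pp d eps) -/den.
have hsum : D * \sum_i pr (j i) e = (\sum_i (j i == e)%:R) * den + N%:R * q.
  have -> : N%:R * q = \sum_(i < N) q by rewrite sumr_const card_ord mulr_natl.
  rewrite mulr_sumr mulr_suml -big_split /=; apply: eq_bigr => i _.
  by rewrite eq_sym -pr_ident; ring.
have hSp : \sum_i pr (j i) e = ((\sum_i (j i == e)%:R) * den + N%:R * q) / D.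
  rewrite -hsum; field; apply: lt0r_neq0; getf; lra.
have hN0 : (N%:R : R) != 0 by rewrite pnatr_eq0 -lt0n.
have hd0 : den != 0 by apply: lt0r_neq0; exact: den_gt0.
rewrite sumrB hSp /KK /qq; field; apply/and3P; split => //; apply: lt0r_neq0; getf; lra.
Qed.

Lemma ind_sum (x g : bits d) : \sum_(e | blk e == g) ((x == e)%:R : R) = (blk x == g)%:R.
Proof.
rewrite big_mkcond /= (bigD1 x) //= eqxx big1 => [|e he].
  by case: (blk x == g); rewrite addr0.
by rewrite (eq_sym x e) (negbTE he); case: ifP.
Qed.

Lemma marg_diff (l : {ffun 'I_N -> bits d}) (g : bits d) :
  marginal beta (@pop_dist R N d j) g - marginal beta (tstar eps l) g = - (KK / N%:R) * YY g l.
Proof.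
rewrite /marginal -sumrB.
under eq_bigr => e _ do rewrite point_diff.
rewrite -mulr_sumr; congr (_ * _).
rewrite exchange_big /YY; apply: eq_bigr => i _.
by rewrite sumrB /ZZ /PP ind_sum.
Qed.

Lemma marg_dist_eq (l : {ffun 'I_N -> bits d}) :
  marg_dist beta (@pop_dist R N d j) (tstar eps l) =
  (KK / N%:R) * \sum_(g | band g beta == g) `|YY g l|.
Proof.
rewrite /marg_dist mulr_sumr; apply: eq_bigr => g _.
rewrite marg_diff normrM normrN [`|KK / _|]ger0_norm //.
by apply: divr_ge0; [exact: KK_ge0 | exact: ler0n].
Qed.

Lemma blk_in (e : bits d) : band (blk e) beta == blk e.
Proof. by apply/eqP/ffunP => i; rewrite !ffunE -andbA andbb. Qed.

Lemma PP_sum (x : bits d) : \sum_(g | band g beta == g) PP g x = 1.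
Proof.
rewrite -(prob_sum eps hd x) [RHS](partition_big blk (fun g => band g beta == g)) /=.
  by apply: eq_bigr => g _; rewrite /PP.
by move=> e _; exact: blk_in.
Qed.

Lemma PP_ge0 (g x : bits d) : 0 <= PP g x.
Proof. by apply: sumr_ge0 => e _; apply: prob_ge0. Qed.

Lemma PP_le1 (g x : bits d) : PP g x <= 1.
Proof.
rewrite -(prob_sum eps hd x) /PP [X in _ <= X]big_mkcond /= big_mkcond /=.
apply: ler_sum => e _; case: ifP => _ //; exact: prob_ge0.
Qed.

Lemma PP_self (x : bits d) : p <= PP (blk x) x.
Proof.
rewrite /PP (bigD1 x) //= hprob eqxx lerDl.
by apply: sumr_ge0 => e _; apply: prob_ge0.
Qed.

Lemma abs_sum (x : bits d) :
  \sum_(g | band g beta == g) `|(blk x == g)%:R - PP g x| <= 2 * q.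
Proof.
rewrite (bigD1 (blk x)) /=; last exact: blk_in.
rewrite eqxx.
have h1 : \sum_(g | (band g beta == g) && (g != blk x)) `|((blk x == g)%:R : R) - PP g x|
   = \sum_(g | (band g beta == g) && (g != blk x)) PP g x.
  apply: eq_bigr => g /andP [_ hg]; rewrite eq_sym (negbTE hg) sub0r normrN.
  by rewrite ger0_norm // PP_ge0.
have h2 := PP_sum x.
rewrite (bigD1 (blk x)) /= in h2; last exact: blk_in.
rewrite h1 ger0_norm; last by rewrite subr_ge0 PP_le1.
have := PP_self x; rewrite /qq (_ : true%:R = 1 :> R) //; lra.
Qed.

Lemma var_le (g x : bits d) : PP g x * (1 - PP g x) <= `|(blk x == g)%:R - PP g x|.
Proof.
have h0 := PP_ge0 g x; have h1 := PP_le1 g x.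
case: (blk x == g) => /=.
  rewrite ger0_norm; last lra. nra.
rewrite sub0r normrN ger0_norm //; nra.
Qed.

Definition WW (l : {ffun 'I_N -> bits d}) : R := \prod_i pr (j i) (l i).

Lemma WW_ge0 l : 0 <= WW l.
Proof. by apply: prodr_ge0 => i _; apply: prob_ge0. Qed.

Lemma prod_exp (G : 'I_N -> bits d -> R) :
  \sum_l WW l * \prod_i G i (l i) = \prod_i \sum_o pr (j i) o * G i o.
Proof.
rewrite bigA_distr_bigA /=; apply: eq_bigr => l _.
by rewrite /WW -big_split.
Qed.

Lemma WW_sum : \sum_l WW l = 1.
Proof.
have h := prod_exp (fun _ _ => 1).
have e1 : \sum_l WW l * \prod_(i < N) (1:R) = \sum_l WW l.
  by apply: eq_bigr => l _; rewrite big1_eq mulr1.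
rewrite -e1 h big1 // => i _.
by under eq_bigr => o _ do rewrite mulr1; rewrite prob_sum.
Qed.

Lemma PP_mk (g x : bits d) : \sum_o pr x o * (blk o == g)%:R = PP g x.
Proof.
rewrite /PP [RHS]big_mkcond /=; apply: eq_bigr => o _.
by case: (blk o == g); rewrite ?mulr1 ?mulr0.
Qed.

End Main.

Section Main2.
Variable R : realType.
Variables (d N : nat) (eps : R) (j : 'I_N -> bits d) (beta : bits d).
Hypothesis hd : (1 <= d)%N.
Hypothesis hN : (0 < N)%N.
Hypothesis heps : 0 < eps.

Local Notation pr := (@inpps_prob R d eps).
Local Notation D := (DD R d).
Local Notation p := (pp d eps).
Local Notation q := (qq d eps).
Local Notation u := (uu eps).

Let hpeq : p * (1 + D * u) = 1 := pp_eq eps hd.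
Let hD1 : 1 <= D := DD_ge1 R hd.
Let hp0 : 0 < p := pp_gt0 eps hd.
Let hu0 : 0 < u := uu_gt0 eps.
Let hu1 : u < 1 := uu_lt1 heps.
Let hqeq : q = D * u * p := qq_eq eps hd.
Let hprob := prob_eq eps hd.
Ltac getf := have ? := hpeq; have ? := hD1; have ? := hp0; have ? := hu0; have ? := hu1.

Local Notation blk := (blk beta).
Local Notation PP := (PP eps beta).
Local Notation ZZ := (ZZ eps beta).
Local Notation YY := (YY eps j beta).
Local Notation KK := (KK d eps).
Local Notation WW := (WW eps j).
Let PP_ge0 := PP_ge0 eps beta hd.
Let PP_le1 := PP_le1 eps beta hd.
Let PP_mk := PP_mk eps beta.
Let prob_sum := prob_sum eps hd.
Let prob_ge0 := prob_ge0 eps hd.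
Let abs_sum := abs_sum eps beta hd.
Let var_le := var_le eps beta hd.
Let WW_ge0 := WW_ge0 eps j hd.
Let WW_sum := WW_sum eps j hd.
Let prod_exp := prod_exp eps j.
Let marg_dist_eq := marg_dist_eq j beta hd hN heps.
Let KK_ge0 := KK_ge0 hd heps.
Let den_gt0 := den_gt0 hd heps.

Lemma mgf (g x : bits d) (t : R) : -(1/2) <= t <= 1/2 ->
  \sum_o pr x o * expR (t * ZZ g x o) <= expR (2 * t^+2 * (PP g x * (1 - PP g x))).
Proof.
move=> /andP [ht1 ht2].
set P := PP g x.
have hP0 : 0 <= P := PP_ge0 g x.
have hP1 : P <= 1 := PP_le1 g x.
apply: le_trans (expR_ge1Dx _).
apply: le_trans (_ : \sum_o (pr x o * (1 - t * P + 2 * t^+2 * P^+2)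
     + (pr x o * (blk o == g)%:R) * (t + 2 * t^+2 * (1 - 2 * P))) <= _).
  apply: ler_sum => o _.
  have hz : t * ZZ g x o <= 1/2.
    apply: small_mul => //; rewrite /ZZ -/P; case: (blk o == g); rewrite ?natr_true ?natr_false; lra.
  have := expR_le_quad hz => he.
  apply: le_trans (ler_wpM2l (prob_ge0 x o) he) _.
  by apply: le_of_eq; rewrite /ZZ -/P; case: (blk o == g); rewrite ?natr_true ?natr_false; ring.
apply: le_of_eq; rewrite big_split /= -!mulr_suml PP_mk prob_sum -/P; ring.
Qed.

Definition VV (g : bits d) : R := \sum_i PP g (j i) * (1 - PP g (j i)).

Lemma tail_one (g : bits d) (b : bool) (lam ss : R) : 0 < lam <= 1/2 ->
  \sum_l WW l * expR (lam * ((if b then 1 else -1) * YY g l - ss))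
    <= expR (2 * lam^+2 * VV g - lam * ss).
Proof.
move=> /andP [hl1 hl2].
have hsg : (if b then 1 else -1 : R) ^+ 2 = 1 by case: (b); rewrite ?expr1n ?sqrrN ?expr1n.
have hsgb : -(1/2) <= lam * (if b then 1 else -1 : R) <= 1/2.
  by case: (b); rewrite ?mulr1 ?mulrN1; apply/andP; split; lra.
set sg : R := if b then 1 else -1.
have e1 : forall l, WW l * expR (lam * (sg * YY g l - ss)) =
    expR (- (lam * ss)) * (WW l * \prod_i expR ((lam * sg) * ZZ g (j i) (l i))).
  move=> l; rewrite -expR_sum -mulr_sumr /YY.
  rewrite mulrCA -expRD; congr (_ * expR _); rewrite mulrBr mulrA; ring.
under eq_bigr => l _ do rewrite e1.
rewrite -mulr_sumr (prod_exp (fun i o => expR (lam * sg * ZZ g (j i) o))).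
have e2 : 2 * lam ^+ 2 * VV g - lam * ss = - (lam * ss) + \sum_i 2 * (lam * sg)^+2 * (PP g (j i) * (1 - PP g (j i))).
  by rewrite /VV mulr_sumr exprMn hsg mulr1 addrC.
rewrite e2 expRD; apply: ler_wpM2l; first exact: ltW (expR_gt0 _).
rewrite expR_sum; apply: ler_prod => i _; apply/andP; split.
  by apply: sumr_ge0 => o _; apply: mulr_ge0; [exact: prob_ge0| exact: ltW (expR_gt0 _)].
exact: mgf.
Qed.

Lemma union_bound (lam ell : R) (E : pred {ffun 'I_N -> bits d}) : 0 < lam <= 1/2 ->
  (forall l, (forall g, band g beta == g -> `|YY g l| <= 2 * lam * VV g + ell / lam) -> E l) ->
  \sum_(l | ~~ E l) WW l <= \sum_(g | band g beta == g) 2 * expR (- ell).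
Proof.
move=> hlam hE.
have /andP [hl1 hl2] := hlam.
set ss := fun g => 2 * lam * VV g + ell / lam.
set G := fun l => \sum_(g | band g beta == g)
   (expR (lam * ((if true then 1 else -1) * YY g l - ss g))
    + expR (lam * ((if false then 1 else -1) * YY g l - ss g))).
apply: le_trans (_ : \sum_(l | ~~ E l) WW l * G l <= _).
  apply: ler_sum => l hl.
  rewrite -{1}[WW l]mulr1; apply: ler_wpM2l; first exact: WW_ge0.
  case: (boolP [forall g, (band g beta == g) ==> (`|YY g l| <= ss g)]) => hall.
    exfalso; move/negP: hl; apply; apply: hE => g hg.
    by move/forallP: hall => /(_ g); rewrite hg.
  move/forallPn: hall => [g]; rewrite negb_imply => /andP [hg hlt].
  rewrite -ltNge in hlt.
  rewrite /G (bigD1 g) //=.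
  have hrest : 0 <= \sum_(i | (band i beta == i) && (i != g))
      (expR (lam * (1 * YY i l - ss i)) + expR (lam * (-1 * YY i l - ss i))).
    by apply: sumr_ge0 => i _; apply: addr_ge0; exact: ltW (expR_gt0 _).
  have hterm : 1 <= expR (lam * (1 * YY g l - ss g)) + expR (lam * (-1 * YY g l - ss g)).
    have ha := expR_gt0 (lam * (1 * YY g l - ss g)).
    have hb := expR_gt0 (lam * (-1 * YY g l - ss g)).
    case: (lerP 0 (YY g l)) => hY.
      rewrite ger0_norm // in hlt.
      have := expR_ge1Dx (lam * (1 * YY g l - ss g)).
      have : 0 <= lam * (1 * YY g l - ss g) by apply: mulr_ge0; lra.
      lra.
    rewrite ltr0_norm // in hlt.
    have := expR_ge1Dx (lam * (-1 * YY g l - ss g)).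
    have : 0 <= lam * (-1 * YY g l - ss g) by apply: mulr_ge0; lra.
    lra.
  lra.
apply: le_trans (_ : \sum_l WW l * G l <= _).
  rewrite [X in _ <= X](bigID (fun l => ~~ E l)) /= lerDl.
  apply: sumr_ge0 => l _; apply: mulr_ge0; first exact: WW_ge0.
  by apply: sumr_ge0 => g _; apply: addr_ge0; exact: ltW (expR_gt0 _).
rewrite /G; under eq_bigr => l _ do rewrite mulr_sumr.
rewrite exchange_big /=; apply: ler_sum => g hg.
under eq_bigr => l _ do rewrite mulrDr.
rewrite big_split /=.
have hid : 2 * lam ^+ 2 * VV g - lam * ss g = - ell.
  rewrite /ss; field; apply: lt0r_neq0; lra.
have t1 := tail_one g true (ss g) hlam.
have t2 := tail_one g false (ss g) hlam.
rewrite hid in t1 t2; lra.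
Qed.

Lemma card_G : (#|[pred g : bits d | band g beta == g]| <= 2 ^ nones beta)%N.
Proof.
set f := fun g : bits d => [set i | g i].
have finj : injective f.
  move=> a b /setP hab; apply/ffunP => i; have := hab i; by rewrite !inE.
rewrite -(card_imset _ finj) /nones -card_powerset; apply: subset_leq_card.
apply/fintype.subsetP => A /imsetP [g]; rewrite inE => /eqP hg ->.
rewrite inE; apply/fintype.subsetP => i; rewrite !inE -hg ffunE => /andP [].
by [].
Qed.

Lemma sumV : \sum_(g | band g beta == g) VV g <= 2 * N%:R * q.
Proof.
rewrite /VV exchange_big /=.
have -> : 2 * N%:R * q = \sum_(i < N) 2 * q by rewrite sumr_const card_ord -mulr_natr; ring.
apply: ler_sum => i _; apply: le_trans (abs_sum (j i)).
by apply: ler_sum => g _; apply: var_le.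
Qed.

Lemma event_compl (E : pred {ffun 'I_N -> bits d}) :
  inpps_event_prob eps j E = 1 - \sum_(l | ~~ E l) WW l.
Proof.
rewrite /inpps_event_prob; apply: (@addIr _ (\sum_(l | ~~ E l) WW l)).
by rewrite subrK -[RHS]WW_sum [RHS](bigID E).
Qed.

Lemma conc (lam ell T delta : R) : 0 < lam <= 1/2 -> 0 <= ell ->
  2 * 2 ^+ nones beta * expR (- ell) <= delta ->
  KK / N%:R * (4 * lam * N%:R * q + 2 ^+ nones beta * ell / lam) <= T ->
  1 - delta <= inpps_event_prob eps j
     (fun l => marg_dist beta (@pop_dist R N d j) (tstar eps l) <= T).
Proof.
move=> hlam hell hdel hT.
have /andP [hl1 hl2] := hlam.
rewrite event_compl.
pose E := (fun l : {ffun 'I_N -> bits d} => marg_dist beta (@pop_dist R N d j) (tstar eps l) <= T).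
have hcard : (#|[pred g : bits d | band g beta == g]|%:R : R) <= 2 ^+ nones beta.
  by rewrite -natrX ler_nat card_G.
have hcard' : forall x : R, 0 <= x -> x *+ #|[pred g : bits d | band g beta == g]| <= x * 2 ^+ nones beta.
  by move=> x hx; rewrite -[x *+ _]mulr_natr; exact: ler_wpM2l hx _ _ hcard.
have hKN : 0 <= KK / N%:R by apply: divr_ge0; [exact: KK_ge0| exact: ler0n].
suff : \sum_(l | ~~ E l) WW l <= delta by rewrite /E; lra.
apply: le_trans (union_bound (ell:=ell) (E := E) hlam _) _.
  move=> l hgood; rewrite /E marg_dist_eq.
  apply: le_trans hT; apply: ler_wpM2l => //.
  apply: le_trans (_ : \sum_(g | band g beta == g) (2 * lam * VV g + ell / lam) <= _).
    by apply: ler_sum => g hg; apply: hgood.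
  rewrite big_split /= -mulr_sumr sumr_const.
  apply: lerD.
    have := sumV; rewrite -mulrA; move=> h; have := ler_wpM2l (ltW (mulr_gt0 (ltr0Sn _ 1) hl1)) h.
    move=> h'; apply: le_trans h' _; apply: le_of_eq; ring.
  apply: le_trans (hcard' _ _) _.
    by apply: divr_ge0 => //; exact: ltW.
  by apply: le_of_eq; ring.
rewrite sumr_const; apply: le_trans hdel.
apply: le_trans (hcard' _ _) _.
  by apply: mulr_ge0 => //; exact: ltW (expR_gt0 _).
by apply: le_of_eq; ring.
Qed.

Lemma noflip (T delta : R) : N%:R * q <= delta -> 2 * KK * q <= T ->
  1 - delta <= inpps_event_prob eps j
     (fun l => marg_dist beta (@pop_dist R N d j) (tstar eps l) <= T).
Proof.
move=> hq hT.
set l0 : {ffun 'I_N -> bits d} := [ffun i => j i].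
set E := (fun l => _).
have hE : E l0.
  rewrite /E marg_dist_eq; apply: le_trans hT.
  have hKN : 0 <= KK / N%:R by apply: divr_ge0; [exact: KK_ge0| exact: ler0n].
  apply: le_trans (_ : KK / N%:R * (2 * N%:R * q) <= _).
    apply: ler_wpM2l => //.
    apply: le_trans (_ : \sum_(g | band g beta == g) \sum_i `|ZZ g (j i) (l0 i)| <= _).
      by apply: ler_sum => g _; rewrite /YY; apply: ler_norm_sum.
    rewrite exchange_big /=.
    have -> : 2 * N%:R * q = \sum_(i < N) 2 * q by rewrite sumr_const card_ord -mulr_natr; ring.
    apply: ler_sum => i _; rewrite /l0 ffunE; exact: abs_sum.
  apply: le_of_eq; field.
  by rewrite pnatr_eq0 -lt0n.
rewrite /inpps_event_prob (bigD1 l0) //=.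
have hrest : 0 <= \sum_(i | E i && (i != l0)) \prod_(i0 < N) pr (j i0) (i i0).
  by apply: sumr_ge0 => l _; exact: WW_ge0.
have hW : \prod_(i < N) pr (j i) (l0 i) = p ^+ N.
  rewrite /l0; under eq_bigr => i _ do rewrite ffunE hprob eqxx.
  by rewrite prodr_const card_ord.
rewrite hW.
have hb := bernoulli_ineq N (_ : 0 <= q <= 1).
have : 1 - N%:R * q <= p ^+ N.
  have -> : p = 1 - q by rewrite /qq; ring.
  have hpu : 0 <= D * u * p by apply: mulr_ge0; [apply: mulr_ge0|]; getf; lra.
  apply: hb; rewrite /qq; apply/andP; split; getf; nra.
lra.
Qed.

End Main2.


Lemma sq_le (R : realType) (a b : R) : 0 <= b -> a ^+ 2 <= b ^+ 2 -> a <= b.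
Proof. move=> hb h; case: (lerP a b) => // hab; nra. Qed.

Lemma sq_le_aux (R : realType) (a b : R) : 0 <= a -> a <= b -> a ^+ 2 <= b ^+ 2.
Proof. move=> h1 h2; nra. Qed.

Lemma case1_num (R : realType) (D u eps N p L r s : R) :
  1 <= D -> 0 < u -> u < 1 -> 0 < eps -> 0 < p -> p * (1 + D * u) = 1 ->
  N * (D * u * p) <= 1 -> eps <= (1 + eps) * (1 - u) -> u * (1 + eps) ^+ 2 <= 4 ->
  0 < s -> s ^+ 2 = N -> 1 <= L -> 1 <= r ->
  2 * ((p * (1 - u))^-1 * (D * u * p)) <= 15 * L ^+ 2 * ((D + 1) * r) / (eps * s).
Proof.
move=> hD hu0 hu1 he hp hpe hN hv4 hu4 hs hs2 hL hr.
have h1u : 0 < 1 - u by lra.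
set v := eps / (1 - u).
have hv0 : 0 <= v by apply: divr_ge0; lra.
have hv1 : v <= 1 + eps by rewrite /v ler_pdivrMr.
rewrite ler_pdivlMr; last exact: mulr_gt0.
have -> : 2 * ((p * (1 - u))^-1 * (D * u * p)) * (eps * s) = 2 * (D * u * v * s).
  rewrite /v; field; apply/andP; split; apply: lt0r_neq0 => //; lra.
have hN0 : 0 <= N by rewrite -hs2; exact: sqr_ge0.
have hNDu : N * (D * u) <= D + 1.
  have e : N * (D * u) = N * (D * u * p) * (1 + D * u).
    by rewrite -mulrA -[D * u * p * _]mulrA hpe mulr1.
  rewrite e; have hDu : 0 <= D * u <= D by apply/andP; split; nra.
  have : N * (D * u * p) * (1 + D * u) <= 1 * (1 + D * u).
    apply: ler_wpM2r; lra.
  lra.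
have hX : D * u * v * s <= 2 * (D + 1).
  apply: sq_le; first lra.
  have e : (D * u * v * s) ^+ 2 = D ^+ 2 * u ^+ 2 * v ^+ 2 * N by rewrite -hs2; ring.
  rewrite e.
  have hv2 : v ^+ 2 <= (1 + eps) ^+ 2 by nra.
  have s1 : D ^+ 2 * u ^+ 2 * v ^+ 2 * N <= D ^+ 2 * u ^+ 2 * (1 + eps) ^+ 2 * N.
    apply: ler_wpM2r => //; apply: ler_wpM2l => //; nra.
  have s2 : D ^+ 2 * u ^+ 2 * (1 + eps) ^+ 2 * N = (D * u * N) * (D * (u * (1 + eps) ^+ 2)) by ring.
  have s3 : (D * u * N) * (D * (u * (1 + eps) ^+ 2)) <= (D + 1) * (D * 4).
    have hDu0 : 0 <= D * u by apply: mulr_ge0; lra.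
    have hu40 : 0 <= u * (1 + eps) ^+ 2 by apply: mulr_ge0; [lra| exact: sqr_ge0].
    apply: ler_pM.
    - exact: mulr_ge0.
    - apply: mulr_ge0 => //; lra.
    - by rewrite mulrC.
    - apply: ler_wpM2l; lra.
  nra.
have : 15 * (D + 1) <= 15 * L ^+ 2 * ((D + 1) * r).
  have hL2 : 1 <= L ^+ 2 by nra.
  have : 1 <= L ^+ 2 * r by nra.
  nra.
lra.
Qed.

Lemma lam_facts (R : realType) (a b : R) : 0 <= a -> 0 < b ->
  let lam := 1/2 * Num.sqrt (b / (a + b)) in
  [/\ 0 < lam, lam <= 1/2 & lam ^+ 2 * (4 * (a + b)) = b].
Proof.
move=> ha hb lam.
have hx : 0 < b / (a + b) by apply: divr_gt0; lra.
have hx1 : b / (a + b) <= 1 by rewrite ler_pdivrMr; lra.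
have hs0 : 0 < Num.sqrt (b / (a + b)) by rewrite sqrtr_gt0.
have hs1 : Num.sqrt (b / (a + b)) <= 1 by rewrite -sqrtr1 ler_sqrt //; lra.
split; rewrite /lam; first (apply: mulr_gt0; lra); first lra.
rewrite exprMn sqr_sqrtr; last lra.
field; apply: lt0r_neq0; lra.
Qed.

Lemma S_bound (R : realType) (lam a b : R) : 0 <= a -> 0 < b -> 0 < lam ->
  lam ^+ 2 * (4 * (a + b)) = b ->
  4 * (lam * a + b / lam) ^+ 2 <= 25 * (b * (a + b)).
Proof.
move=> ha hb hl hl2.
set S := lam * a + b / lam.
have hab : 0 < a + b by lra.
have e1 : S * lam = lam ^+ 2 * a + b by rewrite /S; field; apply: lt0r_neq0.
have hlb : 0 <= lam ^+ 2 * b by apply: mulr_ge0; [exact: sqr_ge0| lra].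
have h3 : 4 * (lam ^+ 2 * a) <= b by lra.
have hS0 : 0 <= S by apply: addr_ge0; [apply: mulr_ge0; lra| apply: divr_ge0; lra].
have h4 : 4 * (S * lam) <= 5 * b by rewrite e1; lra.
have hSl : 0 <= 4 * (S * lam) by apply: mulr_ge0; [lra| apply: mulr_ge0; lra].
have h5 : (4 * (S * lam)) ^+ 2 <= (5 * b) ^+ 2 by nra.
have h4ab : 0 <= 4 * (a + b) by lra.
have h6 := ler_wpM2r h4ab h5.
have e : (4 * (S * lam)) ^+ 2 * (4 * (a + b)) = 16 * S ^+ 2 * (lam ^+ 2 * (4 * (a + b))) by ring.
rewrite e hl2 in h6.
have h4b : 0 < 4 * b by lra.
rewrite -(ler_pM2r h4b).
apply: le_trans (_ : 16 * S ^+ 2 * b <= _); first by apply: le_of_eq; ring.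
apply: le_trans h6 _; apply: le_of_eq; ring.
Qed.

Lemma case2_num (R : realType) (KK eps q ell N m L k2 r s lam : R) :
  0 <= KK -> 0 < eps -> 0 <= q -> 0 < ell -> ell <= L -> 1 <= L -> 0 < k2 -> k2 <= N ->
  0 < N -> r ^+ 2 = k2 -> 0 <= r -> s ^+ 2 = N -> 0 < s -> 0 < m ->
  KK ^+ 2 * q * eps ^+ 2 <= 4 * m ^+ 2 -> KK * eps <= 3 * m * L ->
  0 < lam -> lam ^+ 2 * (4 * (4 * N * q + k2 * ell)) = k2 * ell ->
  KK / N * (4 * lam * N * q + k2 * ell / lam) <= 15 * L ^+ 2 * (m * r) / (eps * s).
Proof.
move=> hK he hq hl hlL hL hk hkN hN hr hr0 hs hs0 hm hKq hKe hlam hl2.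
set a := 4 * N * q; set b := k2 * ell.
have ha : 0 <= a by rewrite /a; apply: mulr_ge0 => //; lra.
have hb : 0 < b by rewrite /b; apply: mulr_gt0.
have eS : 4 * lam * N * q + k2 * ell / lam = lam * a + b / lam by rewrite /a /b; ring.
rewrite eS; set S := lam * a + b / lam.
have hS := S_bound ha hb hlam hl2; rewrite -/S in hS.
rewrite ler_pdivlMr; last exact: mulr_gt0.
apply: sq_le.
  apply: mulr_ge0; [apply: mulr_ge0; [lra| exact: sqr_ge0]| apply: mulr_ge0; lra].
have e1 : (KK / N * S * (eps * s)) ^+ 2 = KK ^+ 2 * S ^+ 2 * eps ^+ 2 / N.
  rewrite !exprMn hs; field; apply: lt0r_neq0; lra.
have e2 : (15 * L ^+ 2 * (m * r)) ^+ 2 = 225 * L ^+ 4 * m ^+ 2 * k2.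
  rewrite !exprMn hr; ring.
rewrite e1 e2 ler_pdivrMr //.
have hK2 : 0 <= KK ^+ 2 * eps ^+ 2 by apply: mulr_ge0; exact: sqr_ge0.
have s1 : KK ^+ 2 * eps ^+ 2 * (4 * S ^+ 2) <= KK ^+ 2 * eps ^+ 2 * (25 * (b * (a + b))).
  exact: ler_wpM2l.
have eI : KK ^+ 2 * eps ^+ 2 * (25 * (b * (a + b)))
   = 25 * k2 * (4 * N * ell * (KK ^+ 2 * q * eps ^+ 2) + (KK * eps) ^+ 2 * ell ^+ 2 * k2).
  by rewrite /a /b; ring.
have hKe0 : 0 <= KK * eps by apply: mulr_ge0; lra.
have i1 : 4 * N * ell * (KK ^+ 2 * q * eps ^+ 2) <= 4 * N * L * (4 * m ^+ 2).
  apply: ler_pM => //.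
  - by apply: mulr_ge0; [apply: mulr_ge0|]; lra.
  - by apply: mulr_ge0; [apply: mulr_ge0|]; [exact: sqr_ge0| lra| exact: sqr_ge0].
  - by apply: ler_wpM2l => //; lra.
have i2a : (KK * eps) ^+ 2 <= (3 * m * L) ^+ 2 by nra.
have i2b : ell ^+ 2 <= L ^+ 2 by nra.
have i2 : (KK * eps) ^+ 2 * ell ^+ 2 * k2 <= (3 * m * L) ^+ 2 * L ^+ 2 * N.
  apply: ler_pM => //; [apply: mulr_ge0; exact: sqr_ge0| lra|].
  apply: ler_pM => //; exact: sqr_ge0.
have hL4 : L <= L ^+ 4.
  have : 1 <= L ^+ 3 by rewrite exprn_ege1.
  rewrite (_ : L ^+ 4 = L * L ^+ 3); last by rewrite exprS.
  nra.
have hI : 4 * N * ell * (KK ^+ 2 * q * eps ^+ 2) + (KK * eps) ^+ 2 * ell ^+ 2 * k2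
   <= 25 * m ^+ 2 * L ^+ 4 * N.
  have : 4 * N * L * (4 * m ^+ 2) <= 16 * m ^+ 2 * L ^+ 4 * N.
    have hmN : 0 <= m ^+ 2 * N by apply: mulr_ge0; [exact: sqr_ge0| lra].
    have := ler_wpM2l hmN hL4; move=> h.
    apply: le_trans (_ : 16 * (m ^+ 2 * N * L) <= _); first by apply: le_of_eq; ring.
    apply: le_trans (_ : 16 * (m ^+ 2 * N * L ^+ 4) <= _); first by apply: ler_wpM2l => //; lra.
    by apply: le_of_eq; ring.
  have : (3 * m * L) ^+ 2 * L ^+ 2 * N = 9 * m ^+ 2 * L ^+ 4 * N by ring.
  lra.
have hk25 : 0 <= 25 * k2 by lra.
have s2 := ler_wpM2l hk25 hI.
rewrite -eI in s2.
have hfin : 25 * k2 * (25 * m ^+ 2 * L ^+ 4 * N) <= 4 * (225 * L ^+ 4 * m ^+ 2 * k2 * N).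
  have : 0 <= m ^+ 2 * L ^+ 4 * N * k2.
    apply: mulr_ge0; [apply: mulr_ge0; [apply: mulr_ge0; [exact: sqr_ge0| apply: exprn_ge0; lra]| lra]| lra].
  move=> h; apply: le_trans (_ : 625 * (m ^+ 2 * L ^+ 4 * N * k2) <= _).
    by apply: le_of_eq; ring.
  apply: le_trans (_ : 900 * (m ^+ 2 * L ^+ 4 * N * k2) <= _); first lra.
  by apply: le_of_eq; ring.
have : 4 * (KK ^+ 2 * S ^+ 2 * eps ^+ 2) <= 4 * (225 * L ^+ 4 * m ^+ 2 * k2 * N).
  apply: le_trans hfin; apply: le_trans s2; apply: le_trans s1; apply: le_of_eq; ring.
lra.
Qed.

Lemma eps_E2 (R : realType) (eps : R) : 0 < eps -> eps <= (1 + eps) * (1 - expR (- eps)).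
Proof.
move=> he.
have h1 := expR_ge1Dx eps.
have hE : expR eps * expR (- eps) = 1 by rewrite -expRD subrr expR0.
have hu := expR_gt0 (- eps).
have : (1 + eps) * expR (- eps) <= expR eps * expR (- eps) by apply: ler_wpM2r; lra.
lra.
Qed.

Lemma eps_E4 (R : realType) (eps : R) : 0 < eps -> expR (- eps) * (1 + eps) ^+ 2 <= 4.
Proof.
move=> he.
set W := expR (eps / 2).
have hW := expR_ge1Dx (eps / 2); rewrite -/W in hW.
have hWW : W * W = expR eps by rewrite /W -expRD; congr expR; field.
have hE : expR eps * expR (- eps) = 1 by rewrite -expRD subrr expR0.
have hu := expR_gt0 (- eps).
have h2 : 1 + eps <= 2 * W by lra.
have h3 : (1 + eps) ^+ 2 <= (2 * W) ^+ 2 by apply: sq_le_aux; lra.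
have : expR (- eps) * (1 + eps) ^+ 2 <= expR (- eps) * (2 * W) ^+ 2 by apply: ler_wpM2l; lra.
have -> : expR (- eps) * (2 * W) ^+ 2 = 4 * (expR eps * expR (- eps)) by rewrite -hWW; ring.
by rewrite hE; lra.
Qed.

Lemma eps_E3 (R : realType) (eps : R) : 0 < eps ->
  expR (- eps) * eps ^+ 2 <= 4 * (1 - expR (- eps)) ^+ 2.
Proof.
move=> he.
set W := expR (eps / 2); set w := expR (- (eps / 2)).
have hW := expR_ge1Dx (eps / 2); rewrite -/W in hW.
have hWw : W * w = 1 by rewrite /W /w -expRD subrr expR0.
have hw0 : 0 < w := expR_gt0 _.
have hw1 : w < 1 by rewrite /w expR_lt1 oppr_lt0; lra.
have hu : expR (- eps) = w * w by rewrite /w -expRD; congr expR; field.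
rewrite hu.
have e : 1 - w * w = w * (W - w) by rewrite mulrBr (mulrC w W) hWw.
have h1 : eps / 2 * w <= 1 - w * w.
  rewrite e mulrC; apply: ler_wpM2l; lra.
have h0 : 0 <= eps / 2 * w by apply: mulr_ge0; lra.
have : (eps / 2 * w) ^+ 2 <= (1 - w * w) ^+ 2 by apply: sq_le_aux; lra.
move=> h; apply: le_trans (_ : 4 * (eps / 2 * w) ^+ 2 <= _).
  by apply: le_of_eq; field.
lra.
Qed.

Lemma KK_bounds (R : realType) (D u p eps : R) : 1 <= D -> 0 < u -> u < 1 -> 0 < p ->
  p * (1 + D * u) = 1 -> 0 < eps -> eps <= (1 + eps) * (1 - u) ->
  u * eps ^+ 2 <= 4 * (1 - u) ^+ 2 ->
  ((p * (1 - u))^-1) ^+ 2 * (D * u * p) * eps ^+ 2 <= 4 * (D + 1) ^+ 2 /\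
  (p * (1 - u))^-1 * eps <= (D + 1) * (1 + eps).
Proof.
move=> hD hu0 hu1 hp hpe he hE2 hE3.
have h1u : 0 < 1 - u by lra.
have hpos : 0 < 1 + D * u by nra.
have hp' : p = (1 + D * u)^-1.
  by apply: (mulIf (lt0r_neq0 hpos)); rewrite hpe mulVf //; apply: lt0r_neq0.
have eK : (p * (1 - u))^-1 = (1 + D * u) / (1 - u).
  rewrite hp'; field; apply/andP; split; apply: lt0r_neq0 => //.
have hDu : 0 <= D * u <= D by apply/andP; split; nra.
split.
  have e : ((p * (1 - u))^-1) ^+ 2 * (D * u * p) * eps ^+ 2
     = D * (1 + D * u) * ((u * eps ^+ 2) / (1 - u) ^+ 2).
    rewrite eK hp'; field; apply/andP; split; apply: lt0r_neq0 => //.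
  rewrite e.
  have h4 : (u * eps ^+ 2) / (1 - u) ^+ 2 <= 4.
    rewrite ler_pdivrMr //; exact: exprn_gt0.
  have h5 : 0 <= (u * eps ^+ 2) / (1 - u) ^+ 2.
    apply: divr_ge0; [apply: mulr_ge0; [lra| exact: sqr_ge0]| exact: sqr_ge0].
  have h6 : D * (1 + D * u) <= (D + 1) ^+ 2 by nra.
  have h7 : 0 <= D * (1 + D * u) by nra.
  have := ler_pM h7 h5 h6 h4; lra.
rewrite eK.
have hv : eps / (1 - u) <= 1 + eps by rewrite ler_pdivrMr.
have hv0 : 0 <= eps / (1 - u) by apply: divr_ge0; lra.
have -> : (1 + D * u) / (1 - u) * eps = (1 + D * u) * (eps / (1 - u)) by field; apply: lt0r_neq0.
apply: ler_pM => //; lra.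
Qed.

Unset Implicit Arguments.

Theorem theorem3 (R : realType) :
  (forall (d : nat) (eps : R), 0 < eps -> local_dp eps (@inpps_prob R d eps)) /\
  exists (C : R) (c : nat), 0 < C /\
    forall (delta eps : R) (d N k : nat) (beta : bits d) (j : 'I_N -> bits d),
      0 < delta < 1 -> 0 < eps -> (1 <= d)%N -> (0 < N)%N -> nones beta = k ->
      C * @logfac R N d k eps delta ^+ c * (2:R) ^+ d <= N%:R ->
      1 - delta <=
        inpps_event_prob eps j
          (fun l => marg_dist beta (@pop_dist R N d j) (tstar eps l)
                    <= C * @logfac R N d k eps delta ^+ c
                       * ((2:R) ^+ d * Num.sqrt ((2:R) ^+ k)) / (eps * Num.sqrt (N%:R))).
Proof.
split; first by move=> d eps he; exact: ldp_part.
exists 15, 2%N; split; first lra.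
move=> delta eps d N k beta j /andP [hd0 hd1] heps hd hN hk hC.
set L := logfac N d k eps delta in hC *.
have hNr : (1 : R) <= N%:R by rewrite ler1n.
have hlnN : 0 <= ln (N%:R : R) by apply: ln_ge0.
have hidel : 1 <= delta^-1 by rewrite invf_ge1 //; lra.
have hlndel : 0 <= ln (delta^-1) by apply: ln_ge0.
have hLlow : 1 + ln (N%:R : R) + ln (delta^-1) <= L.
  rewrite /L /logfac.
  have h1 : 0 <= ln (d.+1%:R : R) by apply: ln_ge0; rewrite ler1n.
  have h2 : 0 <= ln (k.+1%:R : R) by apply: ln_ge0; rewrite ler1n.
  have h3 : 0 <= ln (1 + eps^-1) by apply: ln_ge0; rewrite lerDl invr_ge0; lra.
  lra.
have hL1 : 1 <= L by lra.
have hL2 : 1 <= L ^+ 2 by rewrite exprn_ege1.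
have hm1 : (1 : R) <= 2 ^+ d by rewrite exprn_ege1 // ler1n.
have hmN : (2 : R) ^+ d <= N%:R.
  apply: le_trans hC; rewrite -[X in X <= _]mul1r; apply: ler_wpM2r; first lra.
  nra.
have hkd : (k <= d)%N by rewrite -hk /nones; apply: leq_trans (max_card _) _; rewrite card_ord.
have hkm : (2 : R) ^+ k <= 2 ^+ d.
  by rewrite -!natrX ler_nat leq_pexp2l.
have hk1 : (1 : R) <= 2 ^+ k by rewrite exprn_ege1 // ler1n.
have hDD1 := DD_ge1 R hd.
have hu0 := uu_gt0 eps; have hu1 := uu_lt1 heps.
have hp0 := pp_gt0 eps hd; have hpe := pp_eq eps hd.
have hqe := qq_eq eps hd.
have hKe := KK_eq hd heps.
have hmD : (2 : R) ^+ d = DD R d + 1 by rewrite /DD /mm; ring.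
have hE2 := eps_E2 heps; have hE4 := eps_E4 heps; have hE3 := eps_E3 heps.
rewrite -/(uu eps) in hE2 hE3 hE4.
set s := Num.sqrt (N%:R : R).
have hs0 : 0 < s by rewrite sqrtr_gt0; lra.
have hs2 : s ^+ 2 = N%:R by rewrite sqr_sqrtr //; lra.
set r := Num.sqrt ((2 : R) ^+ k).
have hr2 : r ^+ 2 = 2 ^+ k by rewrite sqr_sqrtr //; lra.
have hr1 : 1 <= r.
  rewrite /r; apply: le_trans (_ : Num.sqrt 1 <= _); first by rewrite sqrtr1.
  by rewrite ler_sqrt; lra.
have hq0 : 0 <= qq d eps by rewrite hqe; apply: mulr_ge0; [apply: mulr_ge0|]; lra.
case: (lerP (N%:R * qq d eps) delta) => hreg.
  apply: noflip => //.
  rewrite hKe hqe -mulrA hmD.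
  apply: case1_num => //; try lra.
  by rewrite hs2 -hqe; lra.
set a := 4 * N%:R * qq d eps.
set b := 2 ^+ k * ln (2 * 2 ^+ k / delta).
have hdpos : 0 < delta by [].
have hx1 : 1 < 2 * 2 ^+ k / delta.
  rewrite ltr_pdivlMr //; lra.
have hell : 0 < ln (2 * 2 ^+ k / delta) by apply: ln_gt0.
have ha : 0 <= a by rewrite /a; apply: mulr_ge0; [apply: mulr_ge0|]; lra.
have hb : 0 < b by rewrite /b; apply: mulr_gt0; lra.
have [hlam0 hlam1 hlam2] := lam_facts ha hb.
set lam := 1 / 2 * Num.sqrt (b / (a + b)) in hlam0 hlam1 hlam2.
have hellL : ln (2 * 2 ^+ k / delta) <= L.
  have e : ln (2 * 2 ^+ k / delta) = ln 2 + ln ((2:R) ^+ k) + ln (delta^-1).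
    rewrite lnM ?posrE; last 2 first.
      by apply: mulr_gt0; lra.
      by rewrite invr_gt0.
    by rewrite lnM ?posrE //; lra.
  have h2 : ln (2 : R) <= 1 by have := @le_ln1Dx R 1; rewrite (_ : 1 + 1 = 2 :> R) //; apply; lra.
  have h3 : ln ((2 : R) ^+ k) <= ln (N%:R : R) by rewrite ler_ln ?posrE; lra.
  lra.
have hepsL : 1 + eps <= 3 * L.
  have hq1 : qq d eps <= 2 ^+ d * uu eps.
    rewrite hqe hmD.
    have : DD R d * uu eps * pp d eps <= DD R d * uu eps * 1.
      apply: ler_wpM2l; first by apply: mulr_ge0; lra.
      nra.
    nra.
  have hEu : expR eps * uu eps = 1 by rewrite /uu -expRD subrr expR0.
  have hex : delta * expR eps <= N%:R * 2 ^+ d.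
    have h := expR_gt0 eps.
    have : N%:R * qq d eps <= N%:R * (2 ^+ d * uu eps) by apply: ler_wpM2l; lra.
    move=> h'; have h'' : delta * expR eps <= N%:R * (2 ^+ d * uu eps) * expR eps.
      apply: ler_wpM2r; lra.
    apply: le_trans h'' _; apply: le_of_eq.
    by rewrite -!mulrA [uu eps * _]mulrC hEu mulr1.
  have hle : eps <= ln (N%:R * 2 ^+ d / delta).
    rewrite -{1}(expRK eps) ler_ln ?posrE; last 2 first.
      exact: expR_gt0.
      by apply: divr_gt0 => //; apply: mulr_gt0; lra.
    by rewrite ler_pdivlMr // mulrC.
  have e : ln (N%:R * 2 ^+ d / delta) = ln (N%:R : R) + ln ((2:R) ^+ d) + ln (delta^-1).
    rewrite lnM ?posrE; last 2 first.
      by apply: mulr_gt0; lra.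
      by rewrite invr_gt0.
    by rewrite lnM ?posrE //; lra.
  have h3 : ln ((2 : R) ^+ d) <= ln (N%:R : R) by rewrite ler_ln ?posrE; lra.
  lra.
have [hKq hKeps] := KK_bounds hDD1 hu0 hu1 hp0 hpe heps hE2 hE3.
rewrite -hKe -hqe -hmD in hKq hKeps.
apply: (@conc R d N eps j beta hd hN heps lam (ln (2 * 2 ^+ k / delta))) => //.
- by rewrite hlam0 hlam1.
- exact: ltW.
- rewrite hk expRN lnK ?posrE; last by apply: divr_gt0 => //; lra.
  rewrite invf_div; apply: le_of_eq; field; lra.
- rewrite hk; apply: case2_num => //; try lra.
  + exact: KK_ge0.
  + apply: le_trans hKeps _.
    have h : 0 <= 2 ^+ d * (3 * L - (1 + eps)) by apply: mulr_ge0; lra.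
    lra.
Qed.
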